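(* Let $\lambda^\pm>0$, $\mu^\pm>0$, $\hat\lambda=\lambda^+-\lambda^-$, $\hat\mu=\mu^+-\mu^-$, and let $g_n,g_t\in\mathbb R$ satisfy $g_n\in[0,1]$, $(1-g_n)^2-g_t^2\ge0$ and $g_n^2-g_t^2\ge0$. Then the matrix $$\Xi=\begin{bmatrix}\lambda^-+2\mu^-&0\\0&\mu^-\end{bmatrix}+\begin{bmatrix}(\hat\lambda+2\hat\mu)g_n&\hat\lambda g_t\\ \hat\mu g_t&\hat\mu g_n\end{bmatrix}$$ satisfies $\det\Xi>2\big(\min\{\mu^+,\mu^-\}\big)^2$.
   Context: In the paper $g_n=g_n(F_0)$, $g_t=g_t(F_0)$ are the values at a specially chosen point $F_0$ of the auxiliary functions $g_n(X)=\sum_{i\in\mathcal I^-}L(A_i)\nabla\psi_i(X)\cdot\bar{\mathbf n}$, $g_t(X)=\sum_{i\in\mathcal I^-}L(A_i)\nabla\psi_i(X)\cdot\bar{\mathbf t}$ on a rectangular interface element; the statement above is the algebraic content, with the inequalities on $g_n,g_t$ as hypotheses. *)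

(* Defs.v *)
From HB Require Import structures.
From mathcomp Require Import all_boot all_order all_algebra.
Set Implicit Arguments. Unset Strict Implicit. Unset Printing Implicit Defensive.
Import Order.TTheory GRing.Theory Num.Theory.
Local Open Scope ring_scope.

Definition mx22 (R : ringType) (a b c d : R) : 'M[R]_2 :=
  \matrix_(i < 2, j < 2)
    (if i == 0 then (if j == 0 then a else b) else (if j == 0 then c else d)).

Definition Xi (R : ringType) (lamp lamm mup mum gn gt : R) : 'M[R]_2 :=
  let lh := lamp - lamm in
  let mh := mup - mum in
  mx22 (lamm + 2 * mum) 0 0 mum
  + mx22 ((lh + 2 * mh) * gn) (lh * gt) (mh * gt) (mh * gn).

(* Main.v *)
Require Import Defs.
From HB Require Import structures.
From mathcomp Require Import all_boot all_order all_algebra.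
From mathcomp Require Import ring lra.
Import Order.TTheory GRing.Theory Num.Theory.
Local Open Scope ring_scope.

Lemma det22 (R : comNzRingType) (M : 'M[R]_2) :
  \det M = M 0 0 * M 1 1 - M 0 1 * M 1 0.
Proof.
rewrite (expand_det_row _ 0) !big_ord_recl big_ord0 /cofactor.
rewrite !det_mx11 /= !mxE /=.
rewrite !expr0 !mul1r addr0.
have -> : (lift 0 (0 : 'I_1)) = 1 by apply/val_inj.
have -> : (lift 1 (0:'I_1)) = 0 by apply/val_inj.
rewrite /bump /= expr1 mulN1r mulrN.
by [].
Qed.

Theorem mainTheorem10 (R : realFieldType) (lamp lamm mup mum gn gt : R) :
  0 < lamp -> 0 < lamm -> 0 < mup -> 0 < mum ->
  0 <= gn -> gn <= 1 ->
  0 <= (1 - gn) ^+ 2 - gt ^+ 2 ->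
  0 <= gn ^+ 2 - gt ^+ 2 ->
  2 * (Num.min mup mum) ^+ 2 < \det (Xi lamp lamm mup mum gn gt).
Proof.
move=> hlp hlm hmp hmm h0 h1 ha hb.
rewrite det22 /Xi /mx22 !mxE /=.
set a := 1 - gn.
set b := gn.
have hab : a + b = 1 by rewrite /a /b; ring.
have a0 : 0 <= a by rewrite /a subr_ge0.
set m := Num.min mup mum.
have m1 : m <= mup by rewrite /m ge_min lexx.
have m2 : m <= mum by rewrite /m ge_min lexx orbT.
have m0 : 0 < m by rewrite /m lt_min hmp hmm.
set P1 := (a ^+ 2 - gt ^+ 2) * (lamm * mum).
set P2 := (b ^+ 2 - gt ^+ 2) * (lamp * mup).
set P3 := (a * b + gt ^+ 2) * (lamm * mup + lamp * mum).
set s := a * mum + b * mup.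
have -> : (lamm + 2 * mum + (lamp - lamm + 2 * (mup - mum)) * b) *
   (mum + (mup - mum) * b) - (0 + (lamp - lamm) * gt) * (0 + (mup - mum) * gt)
   = P1 + P2 + P3 + 2 * s ^+ 2.
  rewrite /P1 /P2 /P3 /s /a /b; ring.
have hP1 : 0 <= P1 by rewrite /P1 mulr_ge0 // mulr_ge0 // ltW.
have hP2 : 0 <= P2 by rewrite /P2 mulr_ge0 // mulr_ge0 // ltW.
have hP3 : 0 <= P3.
  rewrite /P3 mulr_ge0 //; first by rewrite addr_ge0 ?sqr_ge0 // mulr_ge0.
  by rewrite addr_ge0 // mulr_ge0 // ltW.
have hs : m <= s.
  have -> : m = a * m + b * m by rewrite -mulrDl hab mul1r.
  by rewrite /s lerD // ler_wpM2l.
have hs2 : m ^+ 2 <= s ^+ 2 by rewrite ler_sqr // ?nnegrE ltW // (lt_le_trans m0 hs).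
have hpos : 0 < P1 + P2 + P3.
  have [a00|a00] := eqVneq a 0.
    have t0 : gt ^+ 2 = 0.
      apply/eqP; rewrite eq_le sqr_ge0 andbT.
      by move: ha; rewrite -/a a00 expr0n /= sub0r oppr_ge0.
    have b1 : b = 1 by rewrite -hab a00 add0r.
    have : 0 < P2 by rewrite /P2 t0 b1 expr1n subr0 mul1r mulr_gt0.
    lra.
  have [b00|b00] := eqVneq b 0.
    have t0 : gt ^+ 2 = 0.
      apply/eqP; rewrite eq_le sqr_ge0 andbT.
      by move: hb; rewrite -/b b00 expr0n /= sub0r oppr_ge0.
    have a1 : a = 1 by rewrite -hab b00 addr0.
    have : 0 < P1 by rewrite /P1 t0 a1 expr1n subr0 mul1r mulr_gt0.
    lra.
  have apos : 0 < a by rewrite lt_def a00.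
  have bpos : 0 < b by rewrite lt_def b00 h0.
  have : 0 < P3.
    rewrite /P3 mulr_gt0 //; first by rewrite ltr_pwDl ?sqr_ge0 // mulr_gt0.
    by rewrite addr_gt0 // mulr_gt0.
  lra.
lra.
Qed.
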